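(* Let $X\subseteq\{0,1\}^n$ be a nonempty set and let $U=\{c_1,\dots,c_m\}\subseteq\mathbb{R}^{n+1}$ be a finite set of scenarios, $c_j=(\tilde c_j,\bar c_j)$ with $\tilde c_j\in\mathbb{R}$, $\bar c_j\in\mathbb{R}^n$, and $f(x)=\max_{j=1,\dots,m}\,\bar c_j^\top x+\tilde c_j$. Assume that all scenarios are perturbed by a continuously distributed random vector in $\mathbb{R}^{m(n+1)}$ with full-dimensional support (i.e. all $m(n+1)$ entries $\tilde c_j,\bar c_j$ are replaced by their perturbed values). Then, with probability one, in each iteration $k$ of Algorithm SD (described in the context) the set $\partial f(x^k)\cap(-\mathcal{N}_{\operatorname{conv}(V^k)}(x^k))$ is a singleton.
   Context: For a convex function $f$, $\partial f(x)$ denotes its subdifferential at $x$. For a convex set $C$ and $x\in C$, $\mathcal{N}_C(x)=\{d\in\mathbb{R}^n: d^\top(y-x)\le 0\ \forall y\in C\}$ is the normal cone of $C$ at $x$. Algorithm SD: pick any $\hat x^0\in X$ and set $V^1=\{\hat x^0\}$. For $k=1,2,\dots$: compute $\alpha^k\in\mathbb{R}^{V^k}_+$ with $\sum_{v\in V^k}\alpha^k_v=1$, the point $x^k=\sum_{v\in V^k}\alpha^k_v v$ minimizing $f$ over $\operatorname{conv}(V^k)$, and a vector $c^k\in\partial f(x^k)\cap(-\mathcal{N}_{\operatorname{conv}(V^k)}(x^k))$ (in this finite case, $(x^k,\alpha^k)$ together with $z^k=f(x^k)$ is obtained as a basic optimal solution of the linear program $\min\{z:\ \bar c_j^\top x+\tilde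 c_j\le z\ (j=1,\dots,m),\ x=\sum_{v\in V^k}\alpha_v v,\ \alpha\ge 0,\ \sum_{v\in V^k}\alpha_v=1\}$); then compute a minimizer $\hat x^k$ of $\min_{x\in X}(c^k)^\top x$. If $(c^k)^\top\hat x^k\ge (c^k)^\top x^k$, stop and output $x^k$; otherwise set $V^{k+1}:=V^k\cup\{\hat x^k\}$ and continue. *)

(* Defs.v *)
From HB Require Import structures.
From mathcomp Require Import all_boot all_order all_algebra.
From mathcomp Require Import all_classical all_reals all_analysis.
Unset Printing Implicit Defensive.
Import Order.TTheory GRing.Theory Num.Theory.
Local Open Scope classical_set_scope.
Local Open Scope ring_scope.

Section Defs.
Context {R : realType}.

Definition dotp {n : nat} (u v : 'I_n -> R) : R := \sum_(i < n) u i * v i.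
Definition vsub {n : nat} (u v : 'I_n -> R) : 'I_n -> R := fun i => u i - v i.
Definition vopp {n : nat} (u : 'I_n -> R) : 'I_n -> R := fun i => - u i.

(* scenario data in R^{m(n+1)}: c (j, ord0) = tilde c_j,
   c (j, lift ord0 i) = (bar c_j)_i *)
Definition scen_data (n m : nat) := ('I_m * 'I_n.+1)%type -> R.
Definition ctil {n m : nat} (c : scen_data n m) (j : 'I_m) : R := c (j, ord0).
Definition cbar {n m : nat} (c : scen_data n m) (j : 'I_m) : 'I_n -> R :=
  fun i => c (j, lift ord0 i).
Definition aff {n m : nat} (c : scen_data n m) (j : 'I_m) (x : 'I_n -> R) : R :=
  dotp (cbar c j) x + ctil c j.

Definition fobj {n m : nat} (hm : (0 < m)%N) (c : scen_data n m) (x : 'I_n -> R) : R :=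
  \big[Num.max/aff c (Ordinal hm) x]_(j < m) aff c j x.

Definition subdiff {n : nat} (f : ('I_n -> R) -> R) (x : 'I_n -> R) : set ('I_n -> R) :=
  [set g | forall y, f x + dotp g (vsub y x) <= f y].

Definition vnth {n : nat} (V : seq ('I_n -> R)) (i : nat) : 'I_n -> R :=
  nth (fun _ => 0) V i.

Definition comb {n : nat} (V : seq ('I_n -> R)) (a : 'I_(size V) -> R) : 'I_n -> R :=
  fun k => \sum_(i < size V) a i * vnth V i k.

Definition convhull {n : nat} (V : seq ('I_n -> R)) : set ('I_n -> R) :=
  [set y | exists a : 'I_(size V) -> R,
     (forall i, 0 <= a i) /\ \sum_(i < size V) a i = 1 /\ y = comb V a].

Definition normal_cone {n : nat} (C : set ('I_n -> R)) (x : 'I_n -> R) : set ('I_n -> R) :=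
  [set d | forall y, C y -> dotp d (vsub y x) <= 0].

Definition SDset {n : nat} (f : ('I_n -> R) -> R) (V : seq ('I_n -> R)) (x : 'I_n -> R) :=
  subdiff f x `&` [set g | normal_cone (convhull V) x (vopp g)].

(* The LP  min { z : bar c_j^T x + tilde c_j <= z (all j), x = sum_v a_v v,
                     a >= 0, sum_v a_v = 1 } in the variables (x, a, z). *)
Definition lp_feasible {n m : nat} (c : scen_data n m) (V : seq ('I_n -> R))
    (x : 'I_n -> R) (a : 'I_(size V) -> R) (z : R) : Prop :=
  (forall j, aff c j x <= z) /\ x = comb V a /\ (forall i, 0 <= a i) /\
  \sum_(i < size V) a i = 1.

Definition lp_optimal {n m : nat} (c : scen_data n m) (V : seq ('I_n -> R))
    (x : 'I_n -> R) (a : 'I_(size V) -> R) (z : R) : Prop :=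
  lp_feasible c V x a z /\
  forall x' a' z', lp_feasible c V x' a' z' -> z <= z'.

(* basic solution: the constraints active at (x,a,z) contain
   n + |V| + 1 linearly independent ones, i.e. the only direction
   (dx,da,dz) satisfying all active constraints with equality
   (homogeneous version) is zero. *)
Definition lp_basic {n m : nat} (c : scen_data n m) (V : seq ('I_n -> R))
    (x : 'I_n -> R) (a : 'I_(size V) -> R) (z : R) : Prop :=
  forall (dx : 'I_n -> R) (da : 'I_(size V) -> R) (dz : R),
    (forall j, aff c j x = z -> dotp (cbar c j) dx = dz) ->
    dx = comb V da ->
    (forall i, a i = 0 -> da i = 0) ->
    \sum_(i < size V) da i = 0 ->
    [/\ dx = (fun _ => 0), da = (fun _ => 0) & dz = 0].

Definition lp_basic_optimal {n m : nat} (c : scen_data n m) (V : seq ('I_n -> R))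
    (x : 'I_n -> R) (a : 'I_(size V) -> R) (z : R) : Prop :=
  lp_optimal c V x a z /\ lp_basic c V x a z.

(* The sets V^k that can occur in some run of Algorithm SD. *)
Inductive SD_reach {n m : nat} (hm : (0 < m)%N) (X : set ('I_n -> R))
    (c : scen_data n m) : seq ('I_n -> R) -> Prop :=
| SD_reach0 (x0 : 'I_n -> R) : X x0 -> SD_reach hm X c [:: x0]
| SD_reachS (V : seq ('I_n -> R)) (x : 'I_n -> R) (a : 'I_(size V) -> R)
    (g xh : 'I_n -> R) :
    SD_reach hm X c V ->
    lp_basic_optimal c V x a (fobj hm c x) ->
    SDset (fobj hm c) V x g ->
    X xh -> (forall y, X y -> dotp g xh <= dotp g y) ->
    dotp g xh < dotp g x ->
    SD_reach hm X c (rcons V xh).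

Definition SD_singleton_property {n m : nat} (hm : (0 < m)%N) (X : set ('I_n -> R))
    (c : scen_data n m) : Prop :=
  forall V, SD_reach hm X c V ->
  forall (x : 'I_n -> R) (a : 'I_(size V) -> R),
    lp_basic_optimal c V x a (fobj hm c x) ->
    exists g, SDset (fobj hm c) V x = [set g].

Definition cbox {I : finType} (a b : I -> R) : set (I -> R) :=
  [set y | forall i, a i <= y i <= b i].
Definition obox {I : finType} (a b : I -> R) : set (I -> R) :=
  [set y | forall i, a i < y i < b i].

Definition lebesgue_null {I : finType} (A : set (I -> R)) : Prop :=
  forall eps : R, 0 < eps ->
  exists a b : nat -> I -> R,
    (forall k i, a k i <= b k i) /\
    A `<=` \bigcup_k cbox (a k) (b k) /\
    forall N, \sum_(k < N) \prod_(i : I) (b k i - a k i) <= eps.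

End Defs.

Section Prob.
Context {R : realType} {d : measure_display} {Omega : measurableType d}.

(* continuously distributed: distribution absolutely continuous w.r.t. Lebesgue *)
Definition cont_distributed {I : finType} (P : probability Omega R)
    (xi : Omega -> I -> R) : Prop :=
  forall A : set (I -> R), lebesgue_null A ->
    exists N, [/\ measurable N, P N = 0%E & xi @^-1` A `<=` N].

Definition in_support {I : finType} (P : probability Omega R)
    (xi : Omega -> I -> R) (y : I -> R) : Prop :=
  forall a b : I -> R, obox a b y ->
    measurable (xi @^-1` obox a b) /\ (0 < P (xi @^-1` obox a b))%E.

Definition full_dim_support {I : finType} (P : probability Omega R)
    (xi : Omega -> I -> R) : Prop :=
  exists a b : I -> R, (forall i, a i < b i) /\
    forall y, obox a b y -> in_support P xi y.

End Prob.

(* Main.v *)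
Require Import Defs.
From HB Require Import structures.
From mathcomp Require Import all_boot all_order all_algebra.
From mathcomp Require Import all_classical all_reals all_analysis.
From mathcomp Require Import ring lra.
Import Order.TTheory GRing.Theory Num.Theory.
Local Open Scope classical_set_scope.
Local Open Scope ring_scope.
From mathcomp Require Import zify.

Section NullSets.
Variable R : realType.
Variable I : finType.
Hypothesis I0 : (0 < #|I|)%N.

Lemma vol0 (f : I -> R) : \prod_(i : I) (f i - f i) = 0.
Proof.
have [i0 _] := card_gt0P I0.
by rewrite (bigD1 i0) //= subrr mul0r.
Qed.

Lemma null_sub (A B : set (I -> R)) : A `<=` B -> lebesgue_null B -> lebesgue_null A.
Proof.
move=> AB hB eps e0; have [a [b [h1 [h2 h3]]]] := hB eps e0.
exists a, b; split => //; split => //; exact: subset_trans h2.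
Qed.

Lemma null_set0 : lebesgue_null (set0 : set (I -> R)).
Proof.
move=> eps e0; exists (fun _ _ => 0), (fun _ _ => 0); split => //; split => //.
move=> N; rewrite big1 ?ltW // => k _; exact: vol0.
Qed.

Lemma sum_eq_nat (N p : nat) : (\sum_(n < N) ((n : nat) == p) = (p < N))%N.
Proof.
elim: N => [|N IH]; first by rewrite big_ord0.
rewrite big_ord_recr /= IH.
case: eqP => [->|ne]; first by rewrite ltnn ltnSn.
by rewrite addn0 ltnS [in RHS]leq_eqVlt eq_sym (introF eqP ne).
Qed.

Lemma geom_sum (eps : R) (K : nat) :
  \sum_(k < K) eps / 2 ^+ k.+1 = eps - eps / 2 ^+ K.
Proof.
elim: K => [|K IH]; first by rewrite big_ord0 expr0 divr1 subrr.
rewrite big_ord_recr /= IH exprS.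
have h2 : (2 : R) ^+ K != 0 by rewrite expf_neq0.
field; rewrite h2 /=; lra.
Qed.

Lemma null_bigcup (A : nat -> set (I -> R)) :
  (forall k, lebesgue_null (A k)) -> lebesgue_null (\bigcup_k A k).
Proof.
move=> hA eps e0.
have H k : {ab : (nat -> I -> R) * (nat -> I -> R) |
   (forall l i, ab.1 l i <= ab.2 l i) /\
   A k `<=` \bigcup_l cbox (ab.1 l) (ab.2 l) /\
   forall N, \sum_(l < N) \prod_(i : I) (ab.2 l i - ab.1 l i) <= eps / 2 ^+ k.+1}.
  apply: cid.
  have [a [b hab]] := hA k (eps / 2 ^+ k.+1) (divr_gt0 e0 (exprn_gt0 _ (ltr0Sn _ 1))).
  by exists (a, b).
pose a n := match @pickle_inv (nat * nat)%type n with
            | Some (k, l) => (sval (H k)).1 l | None => fun _ => 0 end.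
pose b n := match @pickle_inv (nat * nat)%type n with
            | Some (k, l) => (sval (H k)).2 l | None => fun _ => 0 end.
pose vol k l := \prod_(i : I) ((sval (H k)).2 l i - (sval (H k)).1 l i).
have vol_ge0 k l : 0 <= vol k l.
  apply: prodr_ge0 => i _; rewrite subr_ge0; case: (svalP (H k)) => h _; exact: h.
exists a, b; split; [|split].
- move=> n i; rewrite /a /b; case: pickle_inv => [[k l]|//].
  by case: (svalP (H k)) => h _; exact: h.
- move=> y [k _ /(proj1 (proj2 (svalP (H k))))] [l _ hl].
  exists (pickle (k, l)) => //.
  by rewrite /a /b pickleK_inv.
move=> N.
pose K := (\max_(n < N) match @pickle_inv (nat * nat)%type n with
            | Some (k, l) => maxn k l | None => 0%N end).+1.
have hK (n : 'I_N) k l : pickle_inv n = Some (k, l) -> (k < K)%N /\ (l < K)%N.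
  move=> e; have := @leq_bigmax _ (fun n : 'I_N => match @pickle_inv (nat * nat)%type n with
            | Some (k, l) => maxn k l | None => 0%N end) n.
  rewrite e /K ltnS => h; split; apply: leq_trans h; [exact: leq_maxl|exact: leq_maxr].
have E (n : 'I_N) : \prod_(i : I) (b n i - a n i) =
   \sum_(k < K) \sum_(l < K) ((pickle_inv n == Some ((k : nat), (l : nat)))%:R * vol k l).
  symmetry; rewrite /a /b; case e: pickle_inv => [[k0 l0]|].
    have [hk hl] := hK n _ _ e.
    rewrite (bigD1 (Ordinal hk)) //= [X in _ + X]big1 => [|k hk0]; last first.
      rewrite big1 // => l _; case: eqP => [[ek _]|]; last by rewrite mul0r.
      by move: hk0; rewrite -val_eqE /= ek eqxx.
    rewrite addr0 (bigD1 (Ordinal hl)) //= [X in _ + X]big1 => [|l hl0]; last first.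
      case: eqP => [[el]|]; last by rewrite mul0r.
      by move: hl0; rewrite -val_eqE /= el eqxx.
    by rewrite eqxx mul1r !addr0.
  rewrite vol0 big1 // => k _; rewrite big1 // => l _; by rewrite mul0r.
rewrite (eq_bigr _ (fun n _ => E n)) exchange_big /=.
apply: (@le_trans _ _ (\sum_(k < K) eps / 2 ^+ k.+1)); last first.
  rewrite geom_sum gerBl; apply: divr_ge0; [exact: ltW|exact: exprn_ge0].
apply: ler_sum => k _; rewrite exchange_big /=.
apply: le_trans (proj2 (proj2 (svalP (H k))) K).
apply: ler_sum => l _; rewrite -mulr_suml.
rewrite -[X in _ <= X]mul1r ler_wpM2r //.
have -> : \sum_(i < N) (pickle_inv i == Some ((k : nat), (l : nat)))%:R =
          \sum_(i < N) (((i : nat) == pickle ((k : nat), (l : nat)))%N)%:R :> R.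
  apply: eq_bigr => i _; congr (_ %:R).
  case: eqP => [e|ne]; case: eqP => //.
  - move=> ne'; exfalso; apply: ne'.
    by have := @pickle_invK (nat * nat)%type i; rewrite e /= => <-.
  - move=> e'; exfalso; apply: ne; by rewrite e' pickleK_inv.
by rewrite -natr_sum sum_eq_nat; case: ltnP.
Qed.

End NullSets.

Section LL.
Context {R : realType} {K : finType}.

Definition LL (f : (K -> R) -> R) := forall B : R, 0 <= B -> exists L, 0 <= L /\
  forall p q e, (forall k, `|p k| <= B) -> (forall k, `|q k| <= B) -> 0 <= e ->
   (forall k, `|p k - q k| <= e) -> `|f p - f q| <= L * e.

Lemma LL_cst c : LL (fun _ => c).
Proof. move=> B B0; exists 0; split => // p q e _ _ e0 _; by rewrite subrr normr0 mul0r. Qed.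

Lemma LL_coord k : LL (fun p => p k).
Proof. move=> B B0; exists 1; split => // p q e _ _ e0 h; by rewrite mul1r. Qed.

Lemma LL_add f g : LL f -> LL g -> LL (fun p => f p + g p).
Proof.
move=> hf hg B B0; have [Lf [Lf0 hLf]] := hf B B0; have [Lg [Lg0 hLg]] := hg B B0.
exists (Lf + Lg); split; first exact: addr_ge0.
move=> p q e hp hq e0 hpq.
have -> : f p + g p - (f q + g q) = (f p - f q) + (g p - g q) by ring.
apply: le_trans (ler_normD _ _) _; rewrite mulrDl.
by apply: lerD; [exact: hLf|exact: hLg].
Qed.

Lemma LL_opp f : LL f -> LL (fun p => - f p).
Proof.
move=> hf B B0; have [Lf [Lf0 hLf]] := hf B B0; exists Lf; split => //.
move=> p q e hp hq e0 hpq; rewrite -opprD normrN; exact: hLf.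
Qed.

Lemma LL_sub f g : LL f -> LL g -> LL (fun p => f p - g p).
Proof. by move=> hf hg; apply: LL_add => //; apply: LL_opp. Qed.

Lemma LL_bound f : LL f -> forall B, 0 <= B -> exists M, 0 <= M /\
  forall p, (forall k, `|p k| <= B) -> `|f p| <= M.
Proof.
move=> hf B B0; have [L [L0 hL]] := hf B B0.
exists (`|f (fun _ => 0)| + L * B); split.
  by apply: addr_ge0 => //; apply: mulr_ge0.
move=> p hp.
have h : `|f p - f (fun _ => 0)| <= L * B.
  apply: hL => // k; [by rewrite normr0 | by rewrite subr0; exact: hp].
have -> : f p = (f p - f (fun _ => 0)) + f (fun _ => 0) by ring.
apply: le_trans (ler_normD _ _) _; rewrite addrC; exact: lerD.
Qed.

Lemma LL_mul f g : LL f -> LL g -> LL (fun p => f p * g p).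
Proof.
move=> hf hg B B0; have [Lf [Lf0 hLf]] := hf B B0; have [Lg [Lg0 hLg]] := hg B B0.
have [Mf [Mf0 hMf]] := @LL_bound f hf B B0; have [Mg [Mg0 hMg]] := @LL_bound g hg B B0.
exists (Mf * Lg + Mg * Lf); split.
  by apply: addr_ge0; apply: mulr_ge0.
move=> p q e hp hq e0 hpq.
have -> : f p * g p - f q * g q = f p * (g p - g q) + g q * (f p - f q) by ring.
apply: le_trans (ler_normD _ _) _; rewrite mulrDl -!mulrA !normrM.
apply: lerD; apply: ler_pM => //; [exact: hMf|exact: hLg|exact: hMg|exact: hLf].
Qed.

Lemma LL_sum (J : Type) (r : seq J) (P : pred J) (F : J -> (K -> R) -> R) :
  (forall j, LL (F j)) -> LL (fun p => \sum_(j <- r | P j) F j p).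
Proof.
move=> hF; elim: r => [|j r IH].
  by under eq_fun do rewrite big_nil; exact: LL_cst.
under eq_fun do rewrite big_cons.
case: (P j); last exact: IH.
exact: LL_add.
Qed.

End LL.

Section BoxImage.
Variable R : realType.
Variables K I : finType.
Hypothesis hKI : (#|K| < #|I|)%N.

Lemma sum_ltn_le (N C : nat) : (\sum_(n < N) (n < C) <= C)%N.
Proof.
suff : (\sum_(n < N) (n < C) = minn N C)%N by move=> ->; exact: geq_minr.
elim: N => [|N IH]; first by rewrite big_ord0 min0n.
rewrite big_ord_recr /= IH; case: ltnP => h /=; lia.
Qed.

Lemma null_image_box (F : (K -> R) -> I -> R) (hF : forall i, LL (fun p => F p i))
  (B : nat) : lebesgue_null (F @` [set p | forall k, `|p k| <= B%:R]).
Proof.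
have I0 : (0 < #|I|)%N by apply: leq_ltn_trans hKI.
move=> eps e0.
pose Bp : R := B%:R + 1.
have Bp0 : 0 < Bp by rewrite /Bp; apply: ltr_wpDl.
have H i : {L : R | 0 <= L /\ forall p q e, (forall k, `|p k| <= Bp) ->
   (forall k, `|q k| <= Bp) -> 0 <= e -> (forall k, `|p k - q k| <= e) ->
   `|F p i - F q i| <= L * e}.
  by apply: cid; apply: hF; exact: ltW.
pose L := \sum_i sval (H i).
have L0 : 0 <= L by apply: sumr_ge0 => i _; case: (svalP (H i)).
have LiL i : sval (H i) <= L.
  rewrite /L (bigD1 i) //= lerDl; apply: sumr_ge0 => j _; by case: (svalP (H j)).
pose Cst := (4 * L * Bp) ^+ #|I|.
have Cst0 : 0 <= Cst by apply: exprn_ge0; rewrite !mulr_ge0 // ltW.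
pose M' := Num.Def.archi_bound (Cst / eps).
pose M := M'.+1.
have hM : Cst / eps < M%:R.
  apply: lt_le_trans (archi_boundP _) _; first by apply: divr_ge0 => //; exact: ltW.
  by rewrite ler_nat.
have M0 : (0 : R) < M%:R by rewrite ltr0n.
pose h : R := 2 * Bp / M%:R.
have h0 : 0 < h by rewrite /h; apply: divr_gt0 => //; apply: mulr_gt0.
pose q (s : {ffun K -> 'I_M}) := fun k => - Bp + (s k : nat)%:R * h.
pose lo (s : {ffun K -> 'I_M}) := fun i => F (q s) i - L * h.
pose hi (s : {ffun K -> 'I_M}) := fun i => F (q s) i + L * h.
pose s0 : {ffun K -> 'I_M} := [ffun _ => ord0].
pose C := #|{ffun K -> 'I_M}|.
pose a n := if (n < C)%N then lo (nth s0 (enum {ffun K -> 'I_M}) n) else (fun _ => 0).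
pose b n := if (n < C)%N then hi (nth s0 (enum {ffun K -> 'I_M}) n) else (fun _ => 0).
exists a, b; split; [|split].
- move=> n i; rewrite /a /b; case: ifP => // _.
  rewrite /lo /hi lerD2l; have : 0 <= L * h by rewrite mulr_ge0 // ltW.
  lra.
- move=> y [p hp <-].
  pose s : {ffun K -> 'I_M} :=
    [ffun k => inord (minn (Num.Def.trunc ((p k + Bp) / h)) M')].
  have sval_k k : (s k : nat) = minn (Num.Def.trunc ((p k + Bp) / h)) M'.
    by rewrite /s ffunE inordK // ltnS geq_minr.
  have hpB k : `|p k| <= Bp by apply: le_trans (hp k) _; rewrite /Bp lerDl.
  have hq k : q s k <= p k <= q s k + h.
    have pB : 0 <= (p k + Bp) / h.
      apply: divr_ge0; last exact: ltW.
      by move: (hpB k); rewrite ler_norml => /andP[h1 _]; lra.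
    have [t1 t2] := andP (truncn_itv pB).
    rewrite /q sval_k; apply/andP; split.
      have : (minn (Num.Def.trunc ((p k + Bp) / h)) M')%:R * h <= p k + Bp.
        rewrite -ler_pdivlMr //; apply: le_trans t1; rewrite ler_nat; exact: geq_minl.
      lra.
    case: (leqP (Num.Def.trunc ((p k + Bp) / h)) M') => hm.
      idtac.
      have : p k + Bp <= (Num.Def.trunc ((p k + Bp) / h)).+1%:R * h.
        rewrite -ler_pdivrMr //; exact: ltW.
      rewrite -addn1 natrD mulrDl mul1r; lra.
    idtac.
    have e1 : (M'%:R + 1) * h = 2 * Bp.
      rewrite /h natr1 -/M; field; exact: lt0r_neq0.
    move: (hpB k); rewrite ler_norml => /andP[_ h2].
    rewrite mulrDl mul1r in e1; lra.
  have hqB k : `|q s k| <= Bp.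
    rewrite ler_norml /q; apply/andP; split.
      by rewrite lerDl; apply: mulr_ge0 => //; exact: ltW.
    have : (s k : nat)%:R * h <= M'%:R * h.
      by rewrite ler_pM2r // ler_nat -ltnS.
    have e1 : (M'%:R + 1) * h = 2 * Bp.
      rewrite /h natr1 -/M; field; exact: lt0r_neq0.
    rewrite mulrDl mul1r in e1; lra.
  have sin : s \in enum {ffun K -> 'I_M} by rewrite mem_enum.
  have iC : (index s (enum {ffun K -> 'I_M}) < C)%N by rewrite /C cardE index_mem.
  exists (index s (enum {ffun K -> 'I_M})) => //.
  move=> i; rewrite /a /b iC nth_index // /lo /hi.
  have : `|F p i - F (q s) i| <= L * h.
    apply: le_trans (_ : sval (H i) * h <= _); last by rewrite ler_pM2r.
    case: (svalP (H i)) => _ hH; apply: hH => //; first exact: ltW.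
    move=> k; rewrite ler_norml; have := hq k; move=> /andP[u v]; apply/andP; split; lra.
  rewrite ler_norml => /andP[u v]; apply/andP; split; lra.
- move=> N.
  have vb n : \prod_i (b n i - a n i) <= ((n < C)%N)%:R * (2 * L * h) ^+ #|I|.
    rewrite /a /b; case: ifP => _; last by rewrite vol0 // mul0r.
    rewrite mul1r /lo /hi.
    rewrite (eq_bigr (fun _ => 2 * L * h)) ?prodr_const ?cardT -?cardE // => i _; ring.
  apply: le_trans; first (apply: ler_sum => n _; exact: vb).
  rewrite -mulr_suml -natr_sum.
  apply: (@le_trans _ _ (C%:R * (2 * L * h) ^+ #|I|)).
    apply: ler_wpM2r; first by apply: exprn_ge0; rewrite !mulr_ge0 // ltW.
    rewrite ler_nat; exact: sum_ltn_le.
  rewrite /C card_ffun card_ord natrX.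
  have -> : 2 * L * h = 4 * L * Bp / M%:R by rewrite /h; field; exact: lt0r_neq0.
  rewrite expr_div_n -/Cst.
  have hMI : M%:R ^+ #|K| * M%:R <= M%:R ^+ #|I| :> R.
    rewrite -exprSr; apply: ler_weXn2l => //; by rewrite ler1n.
  have MK0 : (0 : R) < M%:R ^+ #|K| by apply: exprn_gt0.
  have MI0 : (0 : R) < M%:R ^+ #|I| by apply: exprn_gt0.
  apply: (@le_trans _ _ (Cst / M%:R)).
    have key : M%:R ^+ #|K| / M%:R ^+ #|I| <= (M%:R : R)^-1.
      rewrite ler_pdivrMr // -(ler_pM2r M0) mulrAC mulVf ?mul1r //; exact: lt0r_neq0.
    by rewrite mulrCA ler_wpM2l.
  rewrite ler_pdivrMr // mulrC -ler_pdivrMr //; exact: ltW.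
Qed.

Lemma null_range (F : (K -> R) -> I -> R) (hF : forall i, LL (fun p => F p i)) :
  lebesgue_null (range F).
Proof.
have I0 : (0 < #|I|)%N by apply: leq_ltn_trans hKI.
apply: (@null_sub _ _ _ (\bigcup_B (F @` [set p | forall k, `|p k| <= B%:R]))).
  move=> y [p _ <-].
  exists (Num.Def.archi_bound (\sum_k `|p k|)) => //; exists p => // k.
  apply: ltW; apply: le_lt_trans (archi_boundP _); last by apply: sumr_ge0.
  by rewrite (bigD1 k) //= lerDl; apply: sumr_ge0.
apply: null_bigcup => // B; exact: null_image_box.
Qed.

End BoxImage.

Section Bad.
Context {R : realType} {n m : nat}.
Variable c : scen_data (R:=R) n m.

Definition Cb := {ffun 'I_n -> bool}.
Definition vb (b : Cb) : 'I_n -> R := fun l => (b l)%:R.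
Definition xcomb (T : {set Cb}) (w : Cb -> R) : 'I_n -> R :=
  fun l => \sum_(b in T) w b * vb b l.

Definition BadTJ (T : {set Cb}) (J : {set 'I_m}) : set (scen_data n m) :=
  [set y | exists w : Cb -> R, \sum_(b in T) w b = 1 /\
     exists z, forall j, j \in J -> aff (fun ij => c ij + y ij) j (xcomb T w) = z].

Local Notation I := ('I_m * 'I_n.+1)%type.

Lemma aff_expand (d : scen_data (R:=R) n m) j x :
  aff d j x = \sum_l d (j, lift ord0 l) * x l + d (j, ord0).
Proof. by []. Qed.

Lemma null_BadTJ (hm : (0 < m)%N) (T : {set Cb}) (J : {set 'I_m}) : (#|T| < #|J|)%N -> lebesgue_null (BadTJ T J).
Proof.
move=> hTJ.
have I0 : (0 < #|{: I}|)%N by rewrite card_prod !card_ord muln_gt0 hm.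
have [T0|[b0 b0T]] := set_0Vmem T.
  apply: (@null_sub _ _ (BadTJ T J) set0) => //; last exact: null_set0.
  by move=> y [w [hw _]]; move: hw; rewrite T0 big_set0 => /eqP; rewrite eq_sym oner_eq0.
have [j0 j0J] : exists j0, j0 \in J.
  have : (0 < #|J|)%N by apply: leq_ltn_trans hTJ.
  by move/card_gt0P => [j hj]; exists j.
pose RepS : {set I} := [set (j, ord0) | j in J :\ j0]%SET.
pose K := ({ij : I | ij \notin RepS} + {b : Cb | b \in T :\ b0})%type.
have hKI : (#|{: K}| < #|{: I}|)%N.
  rewrite card_sum !card_sig -[X in (_ < X)%N](cardC (mem RepS)).
  have eA : #|[pred x : I | x \notin RepS]| = #|[predC (mem RepS)]| by apply: eq_card.
  have e3 : #|[pred x : Cb | x \in T :\ b0]| = #|T :\ b0| by apply: eq_card.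
  rewrite eA e3 addnC ltn_add2r.
  have e2 : #|RepS| = #|J :\ j0| by rewrite card_imset // => x y [].
  have e4 := cardsD1 j0 J; have e5 := cardsD1 b0 T.
  rewrite j0J /= in e4; rewrite b0T /= in e5.
  by rewrite e2; move: hTJ; rewrite e4 e5 !add1n ltnS.
pose getp (p : K -> R) (ij : I) : R :=
  match (insub ij : option {ij : I | ij \notin RepS}) with
  | Some k => p (inl k) | None => 0 end.
pose getw (p : K -> R) (b : Cb) : R :=
  match (insub b : option {b : Cb | b \in T :\ b0}) with
  | Some k => p (inr k) | None => 0 end.
pose xF (p : K -> R) (l : 'I_n) : R :=
  vb b0 l + \sum_(b in T :\ b0) getw p b * (vb b l - vb b0 l).
pose Fm (p : K -> R) (ij : I) : R :=
  if ij \in RepS then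
    (c (j0, ord0) + getp p (j0, ord0)) - c ij +
    \sum_l ((c (j0, lift ord0 l) + getp p (j0, lift ord0 l)) -
            (c (ij.1, lift ord0 l) + getp p (ij.1, lift ord0 l))) * xF p l
  else getp p ij.
have LLgetp ij : LL (fun p => getp p ij).
  rewrite /getp; case: (insub ij) => [k|]; [exact: LL_coord|exact: LL_cst].
have LLgetw b : LL (fun p => getw p b).
  rewrite /getw; case: (insub b) => [k|]; [exact: LL_coord|exact: LL_cst].
have LLxF l : LL (fun p => xF p l).
  apply: LL_add; first exact: LL_cst.
  apply: (@LL_sum R K _ _ _ (fun b p => getw p b * (vb b l - vb b0 l))) => b.
  apply: LL_mul => //; exact: LL_cst.
have LLF ij : LL (fun p => Fm p ij).
  rewrite /Fm; case: (ij \in RepS); last exact: LLgetp.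
  apply: LL_add; first by apply: LL_sub; [apply: LL_add => //; exact: LL_cst|exact: LL_cst].
  apply: (@LL_sum R K _ _ _ (fun l p => ((c (j0, lift ord0 l) + getp p (j0, lift ord0 l)) -
            (c (ij.1, lift ord0 l) + getp p (ij.1, lift ord0 l))) * xF p l)) => l.
  apply: LL_mul => //.
  by apply: LL_sub; apply: LL_add => //; exact: LL_cst.
apply: (@null_sub _ _ (BadTJ T J) (range Fm)); last exact: null_range.
move=> y [w [hw [z hz]]].
pose p (k : K) : R := match k with inl k' => y (val k') | inr b => w (val b) end.
have gp ij : ij \notin RepS -> getp p ij = y ij.
  by move=> h; rewrite /getp insubT.
have gw b : b \in T :\ b0 -> getw p b = w b.
  by move=> h; rewrite /getw insubT.
have eTb (F : Cb -> R) : \sum_(b in T | b != b0) F b = \sum_(b in T :\ b0) F b.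
  by apply: eq_bigl => b; rewrite !inE andbC.
have hw' : w b0 = 1 - \sum_(b in T :\ b0) w b.
  by rewrite -hw (bigD1 b0) //= eTb addrK.
have xFE : xF p = xcomb T w.
  apply/funext => l; rewrite /xF /xcomb [RHS](bigD1 b0) //= eTb hw'.
  rewrite (eq_bigr (fun b => w b * (vb b l - vb b0 l))); last first.
    by move=> b hb; rewrite gw.
  rewrite (eq_bigr (fun b => w b * vb b l - w b * vb b0 l)); last first.
    by move=> b _; ring.
  rewrite sumrB -mulr_suml; ring.
exists p => //; apply/funext => ij.
rewrite /Fm; case: ifP => hij; last by rewrite gp // hij.
case/imsetP: hij => j; rewrite !inE => /andP[jj0 jJ] ->.
have nR j' l : (j', lift ord0 l) \notin RepS.
  by apply/imsetP => -[j'' _ [_ e]]; move: e; rewrite /bump leq0n.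
have nR0 : (j0, ord0) \notin RepS.
  apply/imsetP => -[j'' ]; rewrite !inE => /andP[h _] [e]; by move: h; rewrite e eqxx.
rewrite gp // /=; under eq_bigr do rewrite !gp //.
have h1 := hz j jJ; have h2 := hz j0 j0J.
rewrite !aff_expand xFE in h1 h2 *.
rewrite (eq_bigr (fun l => (c (j0, lift ord0 l) + y (j0, lift ord0 l)) * xcomb T w l -
   (c (j, lift ord0 l) + y (j, lift ord0 l)) * xcomb T w l)); last by move=> l _; ring.
rewrite sumrB.
move: h1 h2; set s1 := \sum_l _; set s2 := \sum_l _ => h1 h2.
lra.
Qed.

End Bad.

Section LinAlg.
Context {R : realType}.

Lemma mx0E (a b : nat) i j : (0 : 'M[R]_(a, b)) i j = 0.
Proof. by rewrite mxE. Qed.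

Lemma mxDE (a b : nat) (X Y : 'M[R]_(a, b)) i j : (X + Y) i j = X i j + Y i j.
Proof. by rewrite mxE. Qed.

Lemma mx11E (x : 'M[R]_(1,1)) : x = (x 0 0)%:M.
Proof. exact: mx11_scalar. Qed.

Lemma linalg (p q : nat) (A : 'M[R]_(p, q)) :
  (forall (u : 'rV_p) (d : R), (forall c, (u *m A) 0 c = d) ->
      \sum_r u 0 r = 0 -> u = 0 /\ d = 0) ->
  (q <= p)%N ->
  (forall (t : 'rV_q) (t0 : R), exists (u : 'rV_p) (d : R),
      (forall c, (u *m A) 0 c - d = t 0 c) /\ \sum_r u 0 r = t0) /\
  (exists (lam : 'cV_q) (g : R), \sum_c lam c 0 = 1 /\ forall r, (A *m lam) r 0 = g).
Proof.
move=> hinj hqp.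
pose B : 'M[R]_(p, 1) := const_mx 1.
pose C : 'M[R]_(1, q) := const_mx (-1).
pose M := block_mx A B C (0 : 'M[R]_(1,1)).
have uBE (u : 'rV_p) : (u *m B) 0 0 = \sum_r u 0 r.
  by rewrite mxE; apply: eq_bigr => r _; rewrite mxE mulr1.
have dCE (d : 'rV_1) c : (d *m C) 0 c = - d 0 0.
  by rewrite mxE big_ord1 mxE mulrN1.
have rf : row_free M.
  apply: inj_row_free => v hv.
  rewrite -(hsubmxK v) mul_row_block mulmx0 addr0 in hv.
  have := hv; rewrite -row_mx0 => /eq_row_mx [h1 h2].
  have [u0 d0] : lsubmx v = 0 /\ rsubmx v 0 0 = 0.
    apply: hinj.
      move=> c; move: (h1) => /matrixP /(_ 0 c); rewrite mxDE dCE mx0E.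
      by move=> e; apply/eqP; rewrite -subr_eq0 e.
    by rewrite -uBE h2 mx0E.
  rewrite -(hsubmxK v) u0 (mx11E (rsubmx v)) d0.
  by apply/matrixP => i j; rewrite !mxE; case: (fintype.split j) => k; rewrite !mxE ?mulr0n ?mul0rn.
have hpq : (p <= q)%N.
  have := rank_leq_col M; move: rf; rewrite /row_free => /eqP ->.
  by rewrite !addn1 ltnS.
have e : q = p by apply/eqP; rewrite eqn_leq hqp hpq.
subst q.
have uM : M \in unitmx by rewrite -row_free_unit.
split.
  move=> t t0.
  pose v := row_mx t (t0%:M : 'M[R]_(1,1)).
  pose u' := v *m invmx M.
  have hu : u' *m M = v by rewrite /u' mulmxKV.
  exists (lsubmx u'), (rsubmx u' 0 0).
  move: hu; rewrite -(hsubmxK u') mul_row_block mulmx0 addr0 => /eq_row_mx [h1 h2].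
  split.
    move=> c; move: (h1) => /matrixP /(_ 0 c); rewrite mxDE dCE.
    by rewrite hsubmxK => <-.
  by rewrite -uBE hsubmxK h2 mxE.
pose w := col_mx (0 : 'cV_p) ((-1)%:M : 'M[R]_(1,1)).
pose l' := invmx M *m w.
have hl : M *m l' = w by rewrite /l' mulKVmx.
exists (usubmx l'), (- dsubmx l' 0 0).
move: hl; rewrite -(vsubmxK l') mul_block_col mul0mx addr0 => /eq_col_mx [h1 h2].
split.
  move: (h2) => /matrixP /(_ 0 0); rewrite mxE.
  rewrite (eq_bigr (fun c => - usubmx l' c 0)); last by move=> c _; rewrite mxE mulN1r.
  by rewrite sumrN mxE eqxx mulr1n col_mxKu => /oppr_inj.
move=> r; move: (h1) => /matrixP /(_ r 0); rewrite mxE !vsubmxK.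
rewrite mx0E [X in _ + X = _]mxE big_ord1 mxE /B mxE mul1r.
by move/eqP; rewrite addr_eq0 => /eqP.
Qed.

End LinAlg.

Section Basics.
Context {R : realType}.

Lemma dotpC {n} (u v : 'I_n -> R) : dotp u v = dotp v u.
Proof. by apply: eq_bigr => i _; rewrite mulrC. Qed.

Lemma dotpDr {n} (u v w : 'I_n -> R) :
  dotp u (fun l => v l + w l) = dotp u v + dotp u w.
Proof. by rewrite /dotp -big_split; apply: eq_bigr => i _; rewrite mulrDr. Qed.

Lemma dotpZr {n} (u v : 'I_n -> R) (k : R) :
  dotp u (fun l => k * v l) = k * dotp u v.
Proof. by rewrite /dotp mulr_sumr; apply: eq_bigr => i _; rewrite mulrCA. Qed.

Lemma dotpNr {n} (u v : 'I_n -> R) : dotp u (fun l => - v l) = - dotp u v.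
Proof. by rewrite /dotp -sumrN; apply: eq_bigr => i _; rewrite mulrN. Qed.

Lemma dotp_sumr {n} (I : Type) (r : seq I) (P : pred I) (u : 'I_n -> R) (F : I -> 'I_n -> R) :
  dotp u (fun l => \sum_(i <- r | P i) F i l) = \sum_(i <- r | P i) dotp u (F i).
Proof.
rewrite /dotp; under eq_bigr do rewrite mulr_sumr.
by rewrite exchange_big.
Qed.

Lemma dotp_suml {n} (I : Type) (r : seq I) (P : pred I) (u : 'I_n -> R) (F : I -> 'I_n -> R) :
  dotp (fun l => \sum_(i <- r | P i) F i l) u = \sum_(i <- r | P i) dotp (F i) u.
Proof. by rewrite dotpC dotp_sumr; apply: eq_bigr => i _; rewrite dotpC. Qed.

Lemma dotpZl {n} (u v : 'I_n -> R) (k : R) :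
  dotp (fun l => k * v l) u = k * dotp v u.
Proof. by rewrite dotpC dotpZr dotpC. Qed.

Lemma small_pos (K : finType) (al be : K -> R) :
  (forall k, 0 < al k \/ (al k = 0 /\ 0 <= be k)) ->
  exists t0, 0 < t0 /\ forall t, 0 <= t <= t0 -> forall k, 0 <= al k + t * be k.
Proof.
move=> h.
suff : forall s : seq K, exists t0, 0 < t0 /\
   forall t, 0 <= t <= t0 -> forall k, k \in s -> 0 <= al k + t * be k.
  by case/(_ (enum K)) => t0 [t00 ht]; exists t0; split => // t ht' k; apply: ht; rewrite ?mem_enum.
elim => [|k s [t1 [t10 ht1]]]; first by exists 1; split.
have [t2 [t20 ht2]] : exists t2, 0 < t2 /\ forall t, 0 <= t <= t2 -> 0 <= al k + t * be k.
  case: (h k) => [ak|[-> bk]].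
    exists (al k / (1 + `|be k|)); split; first by apply: divr_gt0 => //; apply: ltr_pwDl.
    move=> t /andP[t0 tt].
    have hb : 0 < 1 + `|be k| by apply: ltr_pwDl.
    have : t * (1 + `|be k|) <= al k by rewrite -ler_pdivlMr.
    have : - (t * `|be k|) <= t * be k.
      by rewrite -mulrN ler_wpM2l // lerNl -normrN ler_norm.
    nra.
  by exists 1; split => // t /andP[t0 _]; rewrite add0r mulr_ge0.
exists (Num.min t1 t2); split; first by rewrite lt_min t10 t20.
move=> t /andP[t0 tt] k'; rewrite in_cons => /orP[/eqP ->|ks].
  apply: ht2; rewrite t0 /=; apply: le_trans tt _; by rewrite ge_min lexx orbT.
apply: ht1 => //; rewrite t0 /=; apply: le_trans tt _; by rewrite ge_min lexx.
Qed.

End Basics.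

Section MainA.
Context {R : realType} {n m : nat} (hm : (0 < m)%N) (c : scen_data (R:=R) n m).
Local Notation f := (fobj hm c).

Lemma aff_le_f j y : aff c j y <= f y.
Proof. rewrite /fobj; exact: le_bigmax. Qed.

Lemma f_le y B : (forall j, aff c j y <= B) -> f y <= B.
Proof. move=> h; rewrite /fobj; apply: bigmax_le => //; exact: h. Qed.

Lemma affB j y x : aff c j y - aff c j x = dotp (cbar c j) (vsub y x).
Proof.
rewrite /aff /vsub dotpDr (dotpNr (cbar c j) x); ring.
Qed.

Lemma aff_step j x dx t :
  aff c j (fun l => x l + t * dx l) = aff c j x + t * dotp (cbar c j) dx.
Proof. by rewrite /aff dotpDr dotpZr; ring. Qed.

Lemma small_step x dx d :
  (forall j, aff c j x = f x -> dotp (cbar c j) dx <= d) ->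
  exists t0, 0 < t0 /\ forall t, 0 <= t <= t0 ->
    f (fun l => x l + t * dx l) <= f x + t * d.
Proof.
move=> h.
have hc : forall j, 0 < f x - aff c j x \/
    (f x - aff c j x = 0 /\ 0 <= d - dotp (cbar c j) dx).
  move=> j; have := aff_le_f j x; rewrite le_eqVlt => /orP[/eqP e|lt].
    by right; split; [rewrite e subrr|rewrite subr_ge0; apply: h].
  by left; rewrite subr_gt0.
have [t0 [t00 ht]] := small_pos _ _ _ hc.
exists t0; split => // t ht'; apply: f_le => j.
have := ht t ht' j; rewrite aff_step; nra.
Qed.

Lemma sum_ind (T : finType) (k : T) (F : T -> R) :
  \sum_i ((i == k)%:R * F i) = F k.
Proof.
rewrite (bigD1 k) //= eqxx mul1r big1 ?addr0 // => i /negbTE ->; by rewrite mul0r.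
Qed.


Lemma sum_ind1 (T : finType) (k : T) : \sum_i ((i == k)%:R : R) = 1.
Proof.
rewrite (eq_bigr (fun i => (i == k)%:R * 1)); last by move=> i _; rewrite mulr1.
by rewrite sum_ind.
Qed.

Lemma main_A (V : seq ('I_n -> R)) (x : 'I_n -> R) (a : 'I_(size V) -> R)
  (hX : forall (i : 'I_(size V)) l, vnth V i l = 0 \/ vnth V i l = 1)
  (good : forall (T : {set Cb}) (J : {set 'I_m}), (#|T| < #|J|)%N ->
     ~ (exists w : Cb -> R, \sum_(b in T) w b = 1 /\
          exists z, forall j, j \in J -> aff c j (xcomb T w) = z))
  (hb : lp_basic_optimal c V x a (f x)) :
  exists g, SDset f V x = [set g].
Proof.
move: hb => [[[_ [hxa [ha0 hasum]]] hopt] hbasic].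
pose S := [set i | a i != 0]%SET.
pose J := [set j | aff c j x == f x]%SET.
have inJ j : (j \in J) = (aff c j x == f x) by rewrite inE.
have inS i : (i \in S) = (a i != 0) by rewrite inE.
pose A : 'M[R]_(#|S|, #|J|) :=
  \matrix_(r < #|S|, k < #|J|) dotp (cbar c (enum_val k)) (vnth V (enum_val r : 'I_(size V))).
pose sv (u : 'rV[R]_#|S|) := fun l => \sum_r u 0 r * vnth V (enum_val r) l.
have uAE (u : 'rV[R]_#|S|) k : (u *m A) 0 k = dotp (cbar c (enum_val k)) (sv u).
  rewrite mxE /sv dotp_sumr; apply: eq_bigr => r _; by rewrite mxE dotpZr.
pose lift (u : 'rV[R]_#|S|) := fun i : 'I_(size V) =>
  \sum_r u 0 r * (i == enum_val r)%:R.
have lift_supp u i : i \notin S -> lift u i = 0.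
  move=> hi; rewrite /lift big1 // => r _.
  case: eqP => [e|_]; last by rewrite mulr0.
  by move: hi; rewrite e enum_valP.
have lift_sum u : \sum_i lift u i = \sum_r u 0 r.
  rewrite /lift exchange_big /=; apply: eq_bigr => r _.
  rewrite -mulr_sumr (eq_bigr (fun i => (i == enum_val r)%:R * 1)).
    by rewrite sum_ind mulr1.
  by move=> i _; rewrite mulr1.
have lift_comb u : comb V (lift u) = sv u.
  apply/funext => l; rewrite /comb /sv /lift.
  under eq_bigr do rewrite mulr_suml.
  rewrite exchange_big /=; apply: eq_bigr => r _.
  rewrite (eq_bigr (fun i => (i == enum_val r)%:R * (u 0 r * vnth V i l))).
    by rewrite sum_ind.
  by move=> i _; rewrite mulrAC mulrC.
have lift_at u r : lift u (enum_val r) = u 0 r.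
  rewrite /lift (bigD1 r) //= eqxx mulr1 big1 ?addr0 // => r' hr'.
  case: eqP => [e|_]; last by rewrite mulr0.
  by move: hr'; rewrite (enum_val_inj e) eqxx.
have Jval j : j \in J -> exists k : 'I_#|J|, j = enum_val k.
  by move=> hj; exists (enum_rank_in hj j); rewrite enum_rankK_in.
have Sval i : i \in S -> exists r : 'I_#|S|, i = enum_val r.
  by move=> hi; exists (enum_rank_in hi i); rewrite enum_rankK_in.
have hinj (u : 'rV[R]_#|S|) (d : R) : (forall k, (u *m A) 0 k = d) ->
    \sum_r u 0 r = 0 -> u = 0 /\ d = 0.
  move=> hu hsu.
  have H1 : forall j, aff c j x = f x -> dotp (cbar c j) (comb V (lift u)) = d.
    move=> j /eqP; rewrite -inJ => /Jval [k ->]; by rewrite lift_comb -uAE hu.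
  have H2 : forall i, a i = 0 -> lift u i = 0.
    by move=> i ai; apply: lift_supp; rewrite inS ai eqxx.
  have H3 : \sum_i lift u i = 0 by rewrite lift_sum.
  have [_ hda hd] := hbasic _ _ _ H1 erefl H2 H3.
  split => //; apply/matrixP => i r; rewrite ord1 mxE -lift_at hda //.
have hqp : (#|J| <= #|S|)%N.
  pose code (v : 'I_n -> R) : Cb := [ffun l => v l == 1].
  pose T := [set code (vnth V i) | i : 'I_(size V) in S]%SET.
  pose w (b : Cb) := \sum_(i in S | code (vnth V i) == b) a i.
  have vb_code (i : 'I_(size V)) l : vb (code (vnth V i)) l = vnth V i l.
    by rewrite /vb ffunE; case: (hX i l) => ->; rewrite ?eqxx // eq_sym oner_eq0.
  have aS (F : 'I_(size V) -> R) : \sum_(i in S) a i * F i = \sum_i a i * F i.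
    rewrite [RHS](bigID (fun i => i \in S)) /= [X in _ = _ + X]big1 ?addr0 //.
    by move=> i; rewrite inS negbK => /eqP ->; rewrite mul0r.
  have xc : xcomb T w = x.
    apply/funext => l; rewrite hxa /xcomb /comb -aS.
    rewrite (partition_big_imset (fun i : 'I_(size V) => code (vnth V i))) /=.
    apply: eq_bigr => b _; rewrite /w mulr_suml; apply: eq_bigr => i /andP[_ /eqP <-].
    by rewrite vb_code.
  have ws : \sum_(b in T) w b = 1.
    rewrite -hasum (eq_bigr (fun i => a i * 1)); last by move=> i; rewrite mulr1.
    rewrite -aS (partition_big_imset (fun i : 'I_(size V) => code (vnth V i))) /=.
    by apply: eq_bigr => b _; rewrite /w; apply: eq_bigr => i _; rewrite mulr1.
  have : ~~ (#|T| < #|J|)%N.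
    apply/negP => h; apply: (good T J h); exists w; split => //.
    by exists (f x) => j; rewrite inJ xc => /eqP.
  rewrite -leqNgt => h; apply: leq_trans h _; exact: leq_imset_card.
have [S1 [lam [ga [hlam1 hlamg]]]] := @linalg _ _ _ A hinj hqp.
pose g := fun l => \sum_k lam k 0 * cbar c (enum_val k) l.
have dotp_g v : dotp g v = \sum_k lam k 0 * dotp (cbar c (enum_val k)) v.
  rewrite /g dotp_suml; apply: eq_bigr => k _; by rewrite dotpZl.
have gvS (r : 'I_#|S|) : dotp g (vnth V (enum_val r : 'I_(size V))) = ga.
  rewrite -(hlamg r) mxE dotp_g; apply: eq_bigr => k _; by rewrite mxE mulrC.
have gvS' i : a i != 0 -> dotp g (vnth V i) = ga.
  by rewrite -inS => /Sval [r ->].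
have combE (b : 'I_(size V) -> R) (h : 'I_n -> R) :
    dotp h (comb V b) = \sum_i b i * dotp h (vnth V i).
  rewrite /comb dotp_sumr; apply: eq_bigr => i _; by rewrite dotpZr.
have gx : dotp g x = ga.
  rewrite hxa combE (eq_bigr (fun i => a i * ga)) -?mulr_suml ?hasum ?mul1r //.
  move=> i _; case: (eqVneq (a i) 0) => [->|ai]; first by rewrite !mul0r.
  by rewrite gvS'.
have key (u : 'rV[R]_#|S|) : \sum_k (u *m A) 0 k * lam k 0 = ga * \sum_r u 0 r.
  have -> : \sum_k (u *m A) 0 k * lam k 0 = (u *m A *m lam) 0 0 by rewrite [RHS]mxE.
  rewrite -mulmxA mxE mulr_sumr; apply: eq_bigr => r _; by rewrite hlamg mulrC.
have Opt (da : 'I_(size V) -> R) (s : R) : (forall i, a i = 0 -> 0 <= da i) ->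
    \sum_i da i = 0 -> s < 0 ->
    (forall j, aff c j x = f x -> dotp (cbar c j) (comb V da) <= s) -> False.
  move=> hsupp hsum s0 hdir.
  have hc i : 0 < a i \/ (a i = 0 /\ 0 <= da i).
    have := ha0 i; rewrite le_eqVlt => /orP[/eqP e|lt]; last by left.
    by right; split; [|apply: hsupp].
  have [t1 [t10 ht1]] := small_pos _ _ _ hc.
  have [t2 [t20 ht2]] := small_step _ _ _ hdir.
  pose t := Num.min t1 t2.
  have t0 : 0 < t by rewrite lt_min t10 t20.
  have tt1 : 0 <= t <= t1 by rewrite ltW //= ge_min lexx.
  have tt2 : 0 <= t <= t2 by rewrite ltW //= ge_min lexx orbT.
  pose a' i := a i + t * da i.
  pose x' := comb V a'.
  have x'E : x' = (fun l => x l + t * comb V da l).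
    apply/funext => l; rewrite /x' /comb hxa /comb mulr_sumr -big_split /=.
    by apply: eq_bigr => i _; rewrite /a'; ring.
  have feas : lp_feasible c V x' a' (f x').
    split; first by move=> j; exact: aff_le_f.
    split => //; split; first by move=> i; exact: ht1.
    by rewrite /a' big_split /= -mulr_sumr hsum mulr0 addr0.
  have := hopt _ _ _ feas; have := ht2 t tt2; rewrite -x'E.
  have : t * s < 0 by rewrite pmulr_rlt0.
  lra.
have lam0 k0 : 0 <= lam k0 0.
  rewrite leNgt; apply/negP => hneg.
  have [u [d [hu hsu]]] := S1 (\row_k (- ((k == k0)%:R))) 0.
  have huk k : (u *m A) 0 k = d - (k == k0)%:R by move: (hu k); rewrite [in X in _ = X]mxE => e; lra.
  have hd : d = lam k0 0.
    have := key u; rewrite hsu mulr0.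
    rewrite (eq_bigr (fun k => d * lam k 0 - (k == k0)%:R * lam k 0)); last first.
      by move=> k _; rewrite huk; ring.
    by rewrite sumrB -mulr_sumr hlam1 mulr1 sum_ind => /eqP; rewrite subr_eq0 => /eqP.
  apply: (Opt (lift u) d).
  - by move=> i ai; rewrite lift_supp // inS ai eqxx.
  - by rewrite lift_sum.
  - by rewrite hd.
  - move=> j /eqP; rewrite -inJ => /Jval [k ->]; rewrite lift_comb -uAE.
    rewrite huk; have : 0 <= (k == k0)%:R :> R by [].
    lra.
have gv (i1 : 'I_(size V)) : ga <= dotp g (vnth V i1).
  rewrite leNgt; apply/negP => hneg.
  have [u [d [hu hsu]]] := S1 (\row_k (- dotp (cbar c (enum_val k)) (vnth V i1))) (-1).
  have huk k : (u *m A) 0 k = d - dotp (cbar c (enum_val k)) (vnth V i1).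
    by move: (hu k); rewrite [in X in _ = X]mxE => e; lra.
  have hd : d = dotp g (vnth V i1) - ga.
    have := key u; rewrite hsu.
    rewrite (eq_bigr (fun k => d * lam k 0 - lam k 0 * dotp (cbar c (enum_val k)) (vnth V i1))); last first.
      by move=> k _; rewrite huk; ring.
    rewrite sumrB -mulr_sumr hlam1 mulr1 -dotp_g; lra.
  pose da i := lift u i + (i == i1)%:R.
  have daC : comb V da = (fun l => sv u l + vnth V i1 l).
    apply/funext => l; rewrite /comb /da.
    under eq_bigr do rewrite mulrDl.
    rewrite big_split /=; congr (_ + _); first by have := congr1 (fun F => F l) (lift_comb u).
    by rewrite sum_ind.
  apply: (Opt da d).
  - by move=> i ai; rewrite /da lift_supp ?inS ?ai ?eqxx // add0r.
  - by rewrite /da big_split /= lift_sum hsu sum_ind1 addNr.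
  - lra.
  - move=> j /eqP; rewrite -inJ => /Jval [k ->]; rewrite daC dotpDr -uAE huk; lra.
have dotp_vsub (h y z : 'I_n -> R) : dotp h (vsub y z) = dotp h y - dotp h z.
  by rewrite /vsub dotpDr dotpNr.
have dotp_vopp (h w : 'I_n -> R) : dotp (vopp h) w = - dotp h w.
  by rewrite dotpC /vopp dotpNr dotpC.
have dotp_e (h : 'I_n -> R) l : dotp h (fun l' => (l' == l)%:R) = h l.
  by rewrite /dotp (eq_bigr (fun i => (i == l)%:R * h i)) ?sum_ind // => i _; rewrite mulrC.
have inJk (k : 'I_#|J|) : aff c (enum_val k) x = f x.
  by apply/eqP; rewrite -inJ enum_valP.
have gsub : subdiff f x g.
  move=> y.
  have : \sum_k lam k 0 * aff c (enum_val k) y <= f y.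
    apply: le_trans (_ : \sum_k lam k 0 * f y <= _).
      apply: ler_sum => k _; apply: ler_wpM2l => //; exact: aff_le_f.
    by rewrite -mulr_suml hlam1 mul1r.
  have -> : \sum_k lam k 0 * aff c (enum_val k) y = f x + dotp g (vsub y x).
    rewrite dotp_g -[f x]mul1r -hlam1 mulr_suml -big_split /=; apply: eq_bigr => k _.
    by rewrite -affB inJk; ring.
  done.
have gnc : normal_cone (convhull V) x (vopp g).
  move=> y [b [hb0 [hb1 ->]]].
  rewrite dotp_vopp dotp_vsub gx combE.
  have : ga <= \sum_i b i * dotp g (vnth V i).
    rewrite -[ga]mul1r -hb1 mulr_suml; apply: ler_sum => i _; apply: ler_wpM2l => //.
  lra.
have SDprop h : SDset f V x h -> forall dx d,
    (forall j, aff c j x = f x -> dotp (cbar c j) dx = d) -> dotp h dx = d.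
  move=> [hsub _] dx d hdx.
  have half (dx' : 'I_n -> R) d' :
      (forall j, aff c j x = f x -> dotp (cbar c j) dx' = d') -> dotp h dx' <= d'.
    move=> hd'.
    have hd'' : forall j, aff c j x = f x -> dotp (cbar c j) dx' <= d'.
      by move=> j hj; rewrite hd'.
    have [t0 [t00 ht]] := small_step _ _ _ hd''.
    have := ht t0; rewrite ltW //= lexx => /(_ isT).
    have := hsub (fun l => x l + t0 * dx' l).
    rewrite dotp_vsub dotpDr dotpZr => h1 h2.
    have : t0 * dotp h dx' <= t0 * d' by lra.
    by rewrite ler_pM2l.
  apply/eqP; rewrite eq_le half //=.
  have : dotp h (fun l => - dx l) <= - d.
    by apply: half => j hj; rewrite dotpNr hdx.
  rewrite dotpNr; lra.
have SDv h : SDset f V x h -> forall i, a i != 0 -> dotp h (vnth V i) = dotp h x.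
  move=> [hsub hnc] i ai.
  have ge (i' : 'I_(size V)) : dotp h x <= dotp h (vnth V i').
    have : convhull V (vnth V i').
      exists (fun i'' => (i'' == i')%:R); split; first by move=> ?; exact: ler0n.
      split; first exact: sum_ind1.
      apply/funext => l; rewrite /comb sum_ind //.
    move/hnc; rewrite dotp_vopp dotp_vsub; lra.
  have hs : \sum_i a i * (dotp h (vnth V i) - dotp h x) = 0.
    rewrite (eq_bigr (fun i => a i * dotp h (vnth V i) - a i * dotp h x)); last by move=> ? _; ring.
    by rewrite sumrB -combE -hxa -mulr_suml hasum mul1r subrr.
  have ges (i' : 'I_(size V)) : 0 <= a i' * (dotp h (vnth V i') - dotp h x).
    by rewrite mulr_ge0 // subr_ge0.
  have := @psumr_eq0P _ _ predT _ (fun i _ => ges i) hs i isT.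
  by move/eqP; rewrite mulf_eq0 (negbTE ai) /= subr_eq0 => /eqP.
have uniq h1 h2 : SDset f V x h1 -> SDset f V x h2 -> h1 = h2.
  move=> s1 s2; apply/funext => l.
  have [u [d [hu hsu]]] := S1 (\row_k (- cbar c (enum_val k) l)) 0.
  pose dx := fun l' => (l' == l)%:R + sv u l'.
  have hdx j : aff c j x = f x -> dotp (cbar c j) dx = d.
    move=> /eqP; rewrite -inJ => /Jval [k ->]; rewrite dotpDr -uAE dotp_e.
    move: (hu k); rewrite [in X in _ = X]mxE => e; lra.
  have val h : SDset f V x h -> h l = d.
    move=> sh; have := SDprop h sh dx d hdx.
    rewrite dotpDr dotp_e.
    have -> : dotp h (sv u) = 0.
      rewrite /sv dotp_sumr (eq_bigr (fun r => u 0 r * dotp h x)).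
        by rewrite -mulr_suml hsu mul0r.
      by move=> r _; rewrite dotpZr SDv // -inS enum_valP.
    by rewrite addr0.
  by rewrite (val h1 s1) (val h2 s2).
exists g; apply/seteqP; split => h.
  by move=> sh; apply: uniq sh _; split.
by move=> ->; split.
Qed.

End MainA.

Lemma reach_in (R : realType) (n m : nat) (hm : (0 < m)%N) (X : set ('I_n -> R))
  (c : scen_data n m) V : SD_reach hm X c V ->
  forall i, (i < size V)%N -> X (vnth V i).
Proof.
elim => [x0 hx0|V0 x a g xh _ IH _ _ hxh _ _] i hi.
  by move: hi; rewrite ltnS leqn0 => /eqP ->.
move: hi; rewrite /vnth nth_rcons size_rcons ltnS leq_eqVlt => /orP[/eqP ->|hi].
  by rewrite ltnn eqxx.
by rewrite hi; exact: IH.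
Qed.

Theorem theorem2 (R : realType) (n m : nat) (hm : (0 < m)%N)
  (X : set ('I_n -> R)) (hX0 : X !=set0)
  (hX01 : forall x, X x -> forall i, x i = 0 \/ x i = 1)
  (c : scen_data n m)
  (d : measure_display) (Omega : measurableType d) (P : probability Omega R)
  (xi : Omega -> scen_data n m)
  (hcont : cont_distributed P xi) (hsupp : full_dim_support P xi) :
  {ae P, forall w, SD_singleton_property hm X (fun ij => c ij + xi w ij)}.
Proof.
have I0 : (0 < #|{: ('I_m * 'I_n.+1)%type}|)%N by rewrite card_prod !card_ord muln_gt0 hm.
pose E := enum {: {set @Cb n} * {set 'I_m}}.
pose Aset (k : nat) : set (scen_data (R:=R) n m) :=
  let pr := nth (@finset.set0 _, @finset.set0 _) E k in
  if (#|pr.1| < #|pr.2|)%N then BadTJ c pr.1 pr.2 else set0.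
have hnull : lebesgue_null (\bigcup_k Aset k).
  apply: null_bigcup => // k; rewrite /Aset; case: ifP => h.
    exact: null_BadTJ.
  exact: null_set0.
have [N [mN PN0 hN]] := hcont _ hnull.
exists N; split => // w /= hw; apply: hN => /=.
apply/not_notP => hB; apply: hw => V hV x a hb.
apply: (@main_A R n m hm (fun ij => c ij + xi w ij) V x a _ _ hb).
  move=> i l; apply: hX01; exact: reach_in hV _ (ltn_ord i).
move=> T J hTJ hbad; apply: hB.
exists (index (T, J) E) => //.
rewrite /Aset nth_index ?mem_enum //= hTJ; exact: hbad.
Qed.
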